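(* Let $X$ be a set with at least four elements and let $\Lambda$ be a nontrivial finite distributive lattice. Then there exists an idempotent $e$ in the monoid $\Lambda^{X\times X}$ of $\Lambda$-generalized correspondences on $X$ such that the monoid $e\,\Lambda^{X\times X} e$ is isomorphic to the monoid of binary relations on a set of four elements.
   Context: A $\Lambda$-generalized correspondence on $X$ is a function $X\times X\to\Lambda$. The product of two such, $R$ and $S$, is defined by $RS(x,z)=\bigvee_{y\in X} R(x,y)\wedge S(y,z)$ for all $x,z\in X$; with this product the set $\Lambda^{X\times X}$ of all $\Lambda$-generalized correspondences is a monoid. The monoid of binary relations on a set $Y$ is the set of all subsets of $Y\times Y$ under composition of relations. Nontrivial means $\Lambda$ has more than one element. For an idempotent $e$, $eMe=\{eme : m\in M\}$ is a monoid with identity $e$. *)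

(* Defs.v *)
From HB Require Import structures.
From mathcomp Require Import all_boot all_order.
From mathcomp Require Import boolp.
Set Implicit Arguments. Unset Strict Implicit. Unset Printing Implicit Defensive.
Import Order.TTheory.
Local Open Scope order_scope.

Definition gcorr (X : Type) d (L : finTBDistrLatticeType d) := X -> X -> L.

(* Product: RS(x,z) = \/_{y in X} R(x,y) /\ S(y,z).  Since L is finite, this
   (possibly infinite) join is the finite join of the set of values
   {R(x,y) /\ S(y,z) | y in X}. *)
Definition gprod (X : Type) d (L : finTBDistrLatticeType d)
  (R S : gcorr X L) : gcorr X L :=
  fun x z => \join_(l : L | `[< exists y : X, l = R x y `&` S y z >]) l.

Definition in_corner (X : Type) d (L : finTBDistrLatticeType d)
  (e m : gcorr X L) : Prop :=
  exists m' : gcorr X L, m = gprod (gprod e m') e.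

Definition relcomp4 (R S : rel 'I_4) : rel 'I_4 :=
  fun x z => [exists y, R x y && S y z].
Definition relid4 : rel 'I_4 := fun x y => x == y.

Definition corner_iso_rel4 (X : Type) d (L : finTBDistrLatticeType d)
  (e : gcorr X L) : Prop :=
  exists (f : gcorr X L -> rel 'I_4) (g : rel 'I_4 -> gcorr X L),
    [/\ (forall r, in_corner e (g r)),
        (forall r, f (g r) = r),
        (forall m, in_corner e m -> g (f m) = m),
        (forall m n, in_corner e m -> in_corner e n ->
            f (gprod m n) = relcomp4 (f m) (f n))
      & f e = relid4].

(* Main.v *)
Require Import Defs.
From mathcomp Require Import all_boot all_order.
From mathcomp Require Import boolp.
Set Implicit Arguments. Unset Strict Implicit. Unset Printing Implicit Defensive.
Import Order.TTheory.
Local Open Scope order_scope.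

Section Atom.
Variables (d : Order.disp_t) (L : finTBDistrLatticeType d).

Lemma atom_exists : 1 < #|L| -> exists a : L, a != \bot /\ forall b, b < a -> b = \bot.
Proof.
move=> hL.
have [x0 hx0] : exists x : L, x != \bot.
  apply/existsP; apply: contraLR hL; rewrite negb_exists => /forallP H.
  rewrite -leqNgt; apply: (@leq_trans #|pred1 (\bot : L)|); last by rewrite card1.
  by apply: subset_leq_card; apply/subsetP => y _; have := H y; rewrite negbK.
pose c (y : L) := #|[pred z | z < y]|.
case: (@arg_minnP _ x0 (fun y : L => y != \bot) c hx0) => y hy hmin.
exists y; split => // b hb.
apply/eqP; apply/negPn/negP => hb0.
have := hmin b hb0; rewrite leqNgt; apply/negP/negPn.
apply: proper_card; apply/properP; split.
  by apply/subsetP => z; rewrite !inE => hz; apply: lt_trans hz hb.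
by exists b; rewrite !inE ?ltxx.
Qed.
End Atom.

Section Main.
Variables (X : Type) (d : Order.disp_t) (L : finTBDistrLatticeType d).
Variable x : 'I_4 -> X.
Hypothesis xinj : injective x.
Variable a : L.
Hypothesis a0 : a != \bot.
Hypothesis aat : forall b, b < a -> b = \bot.

Lemma join_eq_c (P : L -> Prop) (c : L) :
  (forall l, P l -> l <= c) -> P c -> \join_(l : L | `[< P l >]) l = c.
Proof.
move=> H Pc; apply/le_anti/andP; split.
  by apply/joinsP => l /asboolP; apply: H.
by apply: (@joins_sup _ _ _ c (fun l => `[< P l >]) id); apply/asboolP.
Qed.

Lemma join_eq_bot (P : L -> Prop) :
  (forall l, P l -> l = \bot) -> \join_(l : L | `[< P l >]) l = \bot.
Proof.
move=> H; apply/eqP; rewrite -lex0; apply/joinsP => l /asboolP /H ->.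
by rewrite lexx.
Qed.

Lemma atomI t : a `&` t = a \/ a `&` t = \bot.
Proof.
have := leIl a t; rewrite le_eqVlt => /orP [/eqP -> | /aat ->]; by [left|right].
Qed.

Definition inimg (z : X) : bool := `[< exists i, z = x i >].
Definition ee : gcorr X L := fun z w => if `[< exists i, z = x i /\ w = x i >] then a else \bot.

Lemma ee_l (m : gcorr X L) z w :
  gprod ee m z w = if inimg z then a `&` m z w else \bot.
Proof.
rewrite /gprod /inimg; case: asboolP => [[i ->]|hn].
  apply: join_eq_c.
    move=> l [y ->]; rewrite /ee; case: asboolP => [[j [/xinj <- ->]]|_].
      by rewrite lexx.
    by rewrite meet0x le0x.
  exists (x i); rewrite /ee; case: asboolP => // [[]]; by exists i.
apply: join_eq_bot => l [y ->]; rewrite /ee; case: asboolP => [[j [hj _]]|_].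
  by case: hn; exists j.
by rewrite meet0x.
Qed.

Lemma ee_r (m : gcorr X L) z w :
  gprod m ee z w = if inimg w then m z w `&` a else \bot.
Proof.
rewrite /gprod /inimg; case: asboolP => [[i ->]|hn].
  apply: join_eq_c.
    move=> l [y ->]; rewrite /ee; case: asboolP => [[j [-> /xinj ->]]|_].
      by rewrite lexx.
    by rewrite meetx0 le0x.
  exists (x i); rewrite /ee; case: asboolP => // [[]]; by exists i.
apply: join_eq_bot => l [y ->]; rewrite /ee; case: asboolP => [[j [_ hj]]|_].
  by case: hn; exists j.
by rewrite meetx0.
Qed.

Definition C (m : gcorr X L) := forall z w,
  (m z w = \bot \/ m z w = a) /\ (m z w = a -> inimg z /\ inimg w).

Lemma corner_C m : in_corner ee m -> C m.
Proof.
move=> [m' ->] z w; rewrite ee_r ee_l.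
case: (boolP (inimg w)) => hw; case: (boolP (inimg z)) => hz //=;
  rewrite ?meet0x;
  try by split; [left | move=> /eqP; rewrite eq_sym (negbTE a0)].
rewrite meetC meetA meetxx; split => //.
by case: (atomI (m' z w)) => ->; [right|left].
Qed.

Lemma C_prod m n : C m -> C n -> forall z w,
  gprod m n z w = if `[< exists y, m z y = a /\ n y w = a >] then a else \bot.
Proof.
move=> Cm Cn z w; rewrite /gprod; case: asboolP => [[y [h1 h2]]|hn].
  apply: join_eq_c; last by exists y; rewrite h1 h2 meetxx.
  move=> l [y' ->]; have [[->|->] _] := Cm z y'; first by rewrite meet0x le0x.
  exact: leIl.
apply: join_eq_bot => l [y ->].
have [[->|h1] _] := Cm z y; first by rewrite meet0x.
have [[->|h2] _] := Cn y w; first by rewrite meetx0.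
by case: hn; exists y.
Qed.


Lemma C_vals m z w : C m -> m z w = if inimg z && inimg w then a `&` m z w else \bot.
Proof.
move=> Cm; have [[->|->] H] := Cm z w.
  by rewrite meetx0; case: ifP.
by have [-> ->] := H erefl; rewrite meetxx.
Qed.

Lemma C_fix m : C m -> gprod (gprod ee m) ee = m.
Proof.
move=> Cm; apply: funext => z; apply: funext => w.
rewrite ee_r ee_l [RHS](C_vals _ _ Cm).
case: (inimg w); case: (inimg z) => //=; last by rewrite meet0x.
by rewrite meetC meetA meetxx.
Qed.

Lemma C_ee : C ee.
Proof.
move=> z w; rewrite /ee; case: asboolP => [[i [-> ->]]|_]; last first.
  by split; [left | move=> /eqP; rewrite eq_sym (negbTE a0)].
by split; [right|]; split; apply/asboolP; exists i.
Qed.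

Lemma ee_ee : gprod ee ee = ee.
Proof.
apply: funext => z; apply: funext => w; rewrite ee_l [RHS](C_vals _ _ C_ee).
case: (inimg z) => //=; case: (boolP (inimg w)) => hw //=.
have [[->|h] H] := C_ee z w; first by rewrite meetx0.
by have [_ hw'] := H h; rewrite hw' in hw.
Qed.

Definition fm (m : gcorr X L) : rel 'I_4 := fun i j => m (x i) (x j) == a.
Definition gr (r : rel 'I_4) : gcorr X L :=
  fun z w => if `[< exists i j, z = x i /\ w = x j /\ r i j >] then a else \bot.

Lemma C_gr r : C (gr r).
Proof.
move=> z w; rewrite /gr; case: asboolP => [[i [j [-> [-> _]]]]|_]; last first.
  by split; [left | move=> /eqP; rewrite eq_sym (negbTE a0)].
by split; [right|]; split; apply/asboolP; [exists i|exists j].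
Qed.

Lemma iso : corner_iso_rel4 ee.
Proof.
exists fm, gr; split.
- by move=> r; exists (gr r); rewrite C_fix //; apply: C_gr.
- move=> r; apply: funext => i; apply: funext => j; rewrite /fm /gr.
  case: asboolP => [[i' [j' [/xinj <- [/xinj <- ->]]]]|hn]; first by rewrite eqxx.
  rewrite eq_sym (negbTE a0); apply/esym/negP => hr; apply: hn; by exists i, j.
- move=> m /corner_C Cm; apply: funext => z; apply: funext => w; rewrite /gr /fm.
  case: asboolP => [[i [j [-> [-> /eqP h]]]]|hn]; first by [].
  have [[->|h] H] := Cm z w => //.
  have [/asboolP [i hi] /asboolP [j hj]] := H h; case: hn; exists i, j.
  by rewrite -hi -hj h eqxx.
- move=> m n /corner_C Cm /corner_C Cn; apply: funext => i; apply: funext => k.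
  rewrite /fm /relcomp4 (C_prod Cm Cn); case: asboolP => [[y [h1 h2]]|hn].
    rewrite eqxx; apply/esym/existsP.
    have [_ /asboolP [j hj]] := (proj2 (Cm (x i) y)) h1.
    by exists j; rewrite -hj h1 h2 eqxx.
  rewrite eq_sym (negbTE a0); apply/esym/existsP => [[j /andP [/eqP h1 /eqP h2]]].
  by apply: hn; exists (x j).
- apply: funext => i; apply: funext => j; rewrite /fm /relid4 /ee.
  case: asboolP => [[k [/xinj -> /xinj ->]]|hn]; first by rewrite !eqxx.
  rewrite eq_sym (negbTE a0); apply/esym/negP => /eqP hij; apply: hn.
  by exists i; rewrite hij.
Qed.

End Main.

Close Scope order_scope.

Theorem lemma10 (X : Type) (d : Order.disp_t) (L : finTBDistrLatticeType d)
  (hX : exists x : 'I_4 -> X, injective x)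
  (hL : 1 < #|L|) :
  exists e : gcorr X L, gprod e e = e /\ corner_iso_rel4 e.
Proof.
case: hX => x xinj; case: (atom_exists hL) => a [a0 aat].
exists (ee x a); split; [exact: ee_ee | exact: iso].
Qed.
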